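(* Let $\mathcal{H}_A\cong\mathcal{H}_B\cong\mathbb{C}^d$ and let $|\Psi\rangle_{AB}$ be a pure state with Schmidt probabilities $p_1,\dots,p_d$ (i.e. $|\Psi\rangle=\sum_i\sqrt{p_i}|\psi_i\rangle_A|\phi_i\rangle_B$ for orthonormal bases $\{\psi_i\},\{\phi_i\}$), and $\Lambda=\mathrm{diag}(p_1,\dots,p_d)$. Let $t\ge2$, $\pi,\sigma\in S_t$, $\beta=\sigma\pi^{-1}$, and let $\xi_1,\dots,\xi_k$ be the cycle lengths of $\beta$ ($k=\#\mathrm{cycles}(\beta)$). Then $$\mathrm{Tr}[(W^A_\pi\otimes W^B_\sigma)\Psi^{\otimes t}]=\prod_{l=1}^{k}\mathrm{Tr}[\Lambda^{\xi_l}]=:\chi(\Psi,\beta),$$ and moreover $d_0(\Psi)^{k-t}\le\chi(\Psi,\beta)\le d_t(\Psi)^{k-t}$, where $d_\alpha(\Psi)=2^{S_\alpha(\Psi)}$.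
   Context: $\Psi=|\Psi\rangle\langle\Psi|$. $W_\pi$ is the operator permuting the $t$ tensor factors; $(\mathcal{H}_A\otimes\mathcal{H}_B)^{\otimes t}\cong\mathcal{H}_A^{\otimes t}\otimes\mathcal{H}_B^{\otimes t}$. The Rényi entropies of the Schmidt distribution are $S_\alpha(\Psi)=\frac{1}{1-\alpha}\log_2\sum_i p_i^\alpha$ for $\alpha>0$, $\alpha\neq1$, and $S_0(\Psi)=\log_2$ of the Schmidt rank (number of nonzero $p_i$), so $d_0(\Psi)$ is the Schmidt rank. *)

(* Defs.v *)
From HB Require Import structures.
From mathcomp Require Import all_boot all_order all_algebra all_fingroup.
From mathcomp Require Import complex.
From mathcomp Require Import all_classical all_reals all_analysis.

Set Implicit Arguments.
Unset Strict Implicit.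
Unset Printing Implicit Defensive.

Import Order.TTheory GRing.Theory Num.Theory ComplexField.
Local Open Scope ring_scope.

Section QDefs.
Variables (R : realType) (d t : nat).
Local Notation C := (R[i]).

(* basis index of H^{(x) t} with H = C^d : strings x_1 ... x_t *)
Definition tstring := {ffun 'I_t -> 'I_d}.

(* Matrix element <a'| W_pi |a> of the operator permuting the t tensor
   factors: W_pi |x_1..x_t> = |x_{pi^-1(1)} .. x_{pi^-1(t)}>. *)
Definition Wperm (pi : 'S_t) (a' a : tstring) : C :=
  (a' == [ffun s => a ((pi^-1)%g s)])%:R.

(* (H_A (x) H_B)^{(x) t} ~ H_A^{(x) t} (x) H_B^{(x) t}: basis indexed by pairs
   of strings.  Matrix element of W^A_pi (x) W^B_sigma. *)
Definition WAB (pi sigma : 'S_t) (x y : tstring * tstring) : C :=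
  Wperm pi x.1 y.1 * Wperm sigma x.2 y.2.

(* amplitudes of |Psi>^{(x) t}, for Psi given by its amplitudes Psi a b
   = <a|_A <b|_B |Psi> *)
Definition tensor_amp (Psi : 'I_d -> 'I_d -> C) (x : tstring * tstring) : C :=
  \prod_(s < t) Psi (x.1 s) (x.2 s).

(* matrix element <x| Psi^{(x) t} |y> of the projector (|Psi><Psi|)^{(x) t} *)
Definition tensor_proj (Psi : 'I_d -> 'I_d -> C) (x y : tstring * tstring) : C :=
  tensor_amp Psi x * (tensor_amp Psi y)^*.

Definition tr_WPsi (pi sigma : 'S_t) (Psi : 'I_d -> 'I_d -> C) : C :=
  \sum_(x : tstring * tstring) \sum_(y : tstring * tstring)
     WAB pi sigma x y * tensor_proj Psi y x.

End QDefs.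

Section Entropy.
Variable R : realType.

Definition log2 (x : R) : R := ln x / ln 2.

Definition renyi (d : nat) (alpha : R) (p : 'I_d -> R) : R :=
  if alpha == 0 then log2 (#|[set i | p i != 0]|%:R)
  else if alpha == 1 then - \sum_(i < d) p i * log2 (p i)
  else (1 - alpha)^-1 * log2 (\sum_(i < d) p i `^ alpha).

Definition deff (d : nat) (alpha : R) (p : 'I_d -> R) : R :=
  2 `^ renyi alpha p.

End Entropy.

(* Main.v *)
Require Import Defs.
From HB Require Import structures.
From mathcomp Require Import all_boot all_order all_algebra all_fingroup.
From mathcomp Require Import complex.
From mathcomp Require Import all_classical all_reals all_analysis.
Import Order.TTheory GRing.Theory Num.Theory ComplexField.
Local Open Scope ring_scope.
From mathcomp Require Import ring lra.
Section Tr.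
Variables (R : realType) (d t : nat).
Local Notation C := (R[i]).
Lemma stepD (psi : 'I_d -> 'I_d -> C) (pi : 'S_t) (f g : {ffun 'I_t -> 'I_d}) :
 (forall i j, \sum_(a < d) psi i a * (psi j a)^* = (i == j)%:R) ->
 \sum_(y : {ffun 'I_t -> 'I_d}) (\prod_(s < t) psi (f s) (y s)) *
    (\prod_(s < t) psi (g s) ([ffun s => y ((pi^-1)%g s)] s))^*
  = (f == [ffun u => g (pi u)])%:R.
Proof.
move=> ON.
transitivity (\sum_(y : {ffun 'I_t -> 'I_d}) \prod_(u < t)
    (psi (f u) (y u) * (psi (g (pi u)) (y u))^*)).
  apply: eq_bigr => y _.
  rewrite rmorph_prod [X in _ * X](reindex_inj (@perm_inj _ pi)) -big_split /=.
  by apply: eq_bigr => u _; rewrite ffunE permK.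
rewrite -(bigA_distr_bigA (fun u a => psi (f u) a * (psi (g (pi u)) a)^*)) /=.
under eq_bigr do rewrite ON.
case: eqP => [->|/ffunP].
  by rewrite big1 // => u _; rewrite ffunE eqxx.
move=> H.
case: (pickP (fun u => f u != g (pi u))) => [u Hu|H0]; last first.
  by exfalso; apply: H => u; rewrite ffunE; apply/eqP; move/negbFE: (H0 u).
by rewrite (bigD1 u) //= (negPf Hu) mul0r.
Qed.
Lemma stepF (K : comPzRingType) (p : 'I_d -> K) (beta : {perm 'I_t}) (j0 : 'I_d) :
 \sum_(g : {ffun 'I_t -> 'I_d} | [forall s, g (beta s) == g s]) \prod_(s < t) p (g s)
 = \prod_(c in porbits beta) \sum_(i < d) p i ^+ #|c|.
Proof.
have Hc : forall c, c \in porbits beta -> forall f : {ffun {set 'I_t} -> 'I_d},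
    \prod_(s < t | porbit beta s == c) p (f (porbit beta s)) = p (f c) ^+ #|c|.
  move=> c /imsetP[x _ ->] f.
  rewrite (eq_bigr (fun _ => p (f (porbit beta x)))) => [|s /eqP->//].
  rewrite prodr_const; congr (_ ^+ _).
  by apply: eq_card => s; exact: eq_porbit_mem.
rewrite (big_distr_big j0 (fun c => c \in porbits beta) predT (fun c i => p i ^+ #|c|)) /=.
pose h (f : {ffun {set 'I_t} -> 'I_d}) := [ffun s => f (porbit beta s)].
pose h' (g : {ffun 'I_t -> 'I_d}) := [ffun c : {set 'I_t} =>
   if c \in porbits beta then (if [pick x in c] is Some x then g x else j0) else j0].
have orb c : c \in porbits beta -> forall x, x \in c -> c = porbit beta x.
  move=> /imsetP[y _ ->] x Hx; apply/eqP; rewrite eq_sym eq_porbit_mem //.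
rewrite (reindex_onto h h').
  apply: eq_big => f.
    apply/idP/idP.
      case/andP=> _ /eqP Hf; apply/pffun_onP; split; last by move=> ?.
      apply/fintype.subsetP => c; rewrite !inE -Hf ffunE; by case: (c \in porbits beta); rewrite ?eqxx.
    case/pffun_onP => Hs _; apply/andP; split.
      apply/forallP => s; rewrite !ffunE; have := porbit_perm beta 1 s; rewrite expg1 => ->; done.
    apply/eqP/ffunP => c; rewrite ffunE.
    case: ifP => Hc'; last first.
      apply/eqP; apply: contraFT Hc' => Hne; apply: (fintype.subsetP Hs); by rewrite !inE eq_sym.
    case: pickP => [x Hx|H0]; last first.
      by move: Hc' => /imsetP[y _ Hy]; move: (H0 y); rewrite Hy porbit_id.
    by rewrite ffunE -(orb c Hc' x Hx).
  move=> Hf.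
  rewrite (partition_big (porbit beta) (mem (porbits beta))) /=; last first.
    by move=> s _; apply: imset_f.
  apply: eq_bigr => c Hc'; rewrite -(Hc c Hc' f).
  by apply: eq_bigr => s _; rewrite ffunE.
move=> g /forallP Hg.
have Hgn n s : g ((beta ^+ n)%g s) = g s.
  elim: n => [|n IH]; first by rewrite expg0 perm1.
  by rewrite expgSr permM (eqP (Hg _)).
apply/ffunP => s; rewrite !ffunE imset_f //.
case: pickP => [x Hx|H0]; last by move: (H0 s); rewrite porbit_id.
by case/porbitP: Hx => n ->.
Qed.
Lemma stepA (pi sigma : 'S_t) (Psi : 'I_d -> 'I_d -> C) :
  tr_WPsi pi sigma Psi = \sum_(y : tstring d t * tstring d t)
     tensor_amp Psi y * (tensor_amp Psi ([ffun s => y.1 ((pi^-1)%g s)], [ffun s => y.2 ((sigma^-1)%g s)]))^*.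
Proof.
rewrite /tr_WPsi exchange_big; apply: eq_bigr => y _.
rewrite (bigD1 ([ffun s => y.1 ((pi^-1)%g s)], [ffun s => y.2 ((sigma^-1)%g s)])) //=.
rewrite big1 ?addr0.
  by rewrite /WAB /Wperm /= !eqxx mul1r mul1r.
case=> x1 x2 /= Hx; rewrite /WAB /Wperm /=.
move: Hx; rewrite xpair_eqE negb_and => /orP [] /negPf -> /=; by rewrite mulr0n ?mulr0 ?mul0r.
Qed.
Lemma trace_pow (p : 'I_d -> R) n : \tr ((diag_mx (\row_(i < d) p i)) ^+ n) = \sum_(i < d) p i ^+ n.
Proof.
have -> : (diag_mx (\row_(i < d) p i)) ^+ n = diag_mx (\row_(i < d) p i ^+ n).
  elim: n => [|n IH].
    by apply/matrixP => i j; rewrite !mxE expr0.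
  by rewrite exprS IH -mulmxE mulmx_diag; congr diag_mx; apply/rowP => j; rewrite !mxE exprS.
by rewrite mxtrace_diag; apply: eq_bigr => i _; rewrite mxE.
Qed.
End Tr.

Section P1.
Variables (R : realType) (d t : nat).
Local Notation C := (R[i]).
Lemma part1 (p : 'I_d -> R) (psi phi : 'I_d -> 'I_d -> C) (pi sigma : 'S_t) (j0 : 'I_d) :
 (forall i, 0 <= p i) ->
 (forall i j, \sum_(a < d) psi i a * (psi j a)^* = (i == j)%:R) ->
 (forall i j, \sum_(a < d) phi i a * (phi j a)^* = (i == j)%:R) ->
 tr_WPsi pi sigma (fun a b : 'I_d => \sum_(i < d) ((Num.sqrt (p i))%:C)%C * psi i a * phi i b)
 = \prod_(c in porbits ((pi^-1) * sigma)%g) \sum_(i < d) ((p i)%:C)%C ^+ #|c|.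
Proof.
move=> p0 Opsi Ophi.
set Psi := fun a b : 'I_d => _.
pose A (f : {ffun 'I_t -> 'I_d}) := \prod_(s < t) ((Num.sqrt (p (f s)))%:C)%C.
have ampE y1 y2 : tensor_amp Psi (y1, y2) = \sum_(f : {ffun 'I_t -> 'I_d})
    A f * (\prod_(s < t) psi (f s) (y1 s)) * (\prod_(s < t) phi (f s) (y2 s)).
  rewrite /tensor_amp /Psi bigA_distr_bigA /=; apply: eq_bigr => f _.
  by rewrite /A -!big_split.
have Areal f : (A f)^* = A f.
  by rewrite /A rmorph_prod; apply: eq_bigr => s _; exact: conjc_real.
transitivity (\sum_(y1 : {ffun 'I_t -> 'I_d}) \sum_(y2 : {ffun 'I_t -> 'I_d})
   tensor_amp Psi (y1,y2) * (tensor_amp Psi ([ffun s => y1 ((pi^-1)%g s)], [ffun s => y2 ((sigma^-1)%g s)]))^*).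
  by rewrite stepA pair_bigA; apply: eq_bigr => -[y1 y2] _.
transitivity (\sum_(f : {ffun 'I_t -> 'I_d}) \sum_(g : {ffun 'I_t -> 'I_d}) A f * A g *
  ((\sum_(y1 : {ffun 'I_t -> 'I_d}) (\prod_(s < t) psi (f s) (y1 s)) *
    (\prod_(s < t) psi (g s) ([ffun s => y1 ((pi^-1)%g s)] s))^*) *
   (\sum_(y2 : {ffun 'I_t -> 'I_d}) (\prod_(s < t) phi (f s) (y2 s)) *
    (\prod_(s < t) phi (g s) ([ffun s => y2 ((sigma^-1)%g s)] s))^*))).
  under eq_bigr => y1 _ do under eq_bigr => y2 _ do rewrite !ampE rmorph_sum mulr_suml.
  under eq_bigr => y1 _ do under eq_bigr => y2 _ do under eq_bigr => f _ do rewrite mulr_sumr.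
  under eq_bigr => y1 _ do rewrite exchange_big.
  rewrite exchange_big.
  under eq_bigr => f _ do under eq_bigr => y1 _ do rewrite exchange_big.
  under eq_bigr => f _ do rewrite exchange_big.
  apply: eq_bigr => f _; apply: eq_bigr => g _.
  rewrite big_distrlr mulr_sumr; apply: eq_bigr => y1 _.
  rewrite mulr_sumr; apply: eq_bigr => y2 _.
  rewrite !rmorphM /= Areal; ring.
apply: etrans; first by apply: eq_bigr => f _; apply: eq_bigr => g _; rewrite (stepD _ _ _ _ _ f g Opsi) (stepD _ _ _ _ _ f g Ophi); reflexivity.
have Api (g : {ffun 'I_t -> 'I_d}) : A [ffun u => g (pi u)] = A g.
  by rewrite /A [RHS](reindex_inj (@perm_inj _ pi)); apply: eq_bigr => s _; rewrite ffunE.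
have AA (g : {ffun 'I_t -> 'I_d}) : A g * A g = \prod_(s < t) ((p (g s))%:C)%C.
  rewrite /A -big_split; apply: eq_bigr => s _ /=.
  by rewrite -rmorphM -expr2 sqr_sqrtr.
have Heq (g : {ffun 'I_t -> 'I_d}) : ([ffun u => g (pi u)] == [ffun u => g (sigma u)]) =
     [forall s, g (((pi^-1) * sigma)%g s) == g s].
  apply/eqP/forallP => [H s|H].
    move/ffunP: H => /(_ ((pi^-1)%g s)); rewrite !ffunE permKV permM => <-; done.
  apply/ffunP => u; rewrite !ffunE; move/eqP: (H (pi u)); rewrite permM permK => ->; done.
rewrite exchange_big /= -(stepF _ _ _ (fun i => ((p i)%:C)%C) _ j0) [RHS]big_mkcond /=; apply: eq_bigr => g _.
rewrite (bigD1 [ffun u => g (pi u)]) //= big1 => [|f /negPf ->]; last first.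
  by rewrite mulr0n mul0r mulr0.
rewrite eqxx mul1r addr0 Api AA Heq; case: ifP => _; by rewrite ?mulr1 ?mulr0.
Qed.
End P1.

Section Ineq.
Variables (R : realType) (d : nat) (p : 'I_d -> R).
Hypotheses (p0 : forall i, 0 <= p i) (p1 : \sum_(i < d) p i = 1).
Let S n := \sum_(i < d) p i ^+ n.

Lemma S_1 : S 1 = 1.
Proof. by rewrite /S; under eq_bigr do rewrite expr1. Qed.

Lemma S_gt0 n : 0 < S n.
Proof.
case: (pickP (fun i => 0 < p i)) => [i Hi|H]; last first.
  move: p1; rewrite big1 => [|i _]; first by move/eqP; rewrite eq_sym oner_eq0.
  by apply/eqP; rewrite eq_le (p0 i) andbT leNgt H.
rewrite /S (bigD1 i) //=; apply: (lt_le_trans (exprn_gt0 n Hi)).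
rewrite lerDl; apply: sumr_ge0 => j _; exact: exprn_ge0.
Qed.

Lemma dsplit (F G H : 'I_d -> 'I_d -> R) :
  \sum_(i < d) \sum_(j < d) (F i j + G i j - H i j *+ 2) =
  \sum_(i < d) \sum_(j < d) F i j + \sum_(i < d) \sum_(j < d) G i j - (\sum_(i < d) \sum_(j < d) H i j) *+ 2.
Proof.
rewrite -sumrMnl -big_split -sumrB /=; apply: eq_bigr => i _.
by rewrite -sumrMnl -big_split -sumrB.
Qed.

Lemma cs m : S m.+1 ^+ 2 <= S m * S m.+2.
Proof.
have D a b : \sum_(i < d) \sum_(j < d) p i ^+ a * p j ^+ b = S a * S b.
  by rewrite /S big_distrlr.
have E : S m * S m.+2 + S m.+2 * S m - (S m.+1 * S m.+1) *+ 2 =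
   \sum_(i < d) \sum_(j < d) (p i ^+ m * p j ^+ m * (p i - p j) ^+ 2).
  rewrite -!D -dsplit; apply: eq_bigr => i _; apply: eq_bigr => j _.
  rewrite !exprS; ring.
have : 0 <= S m * S m.+2 + S m.+2 * S m - (S m.+1 * S m.+1) *+ 2.
  rewrite E; apply: sumr_ge0 => i _; apply: sumr_ge0 => j _.
  by apply: mulr_ge0; [apply: mulr_ge0; apply: exprn_ge0; exact: p0 | exact: sqr_ge0].
rewrite expr2 [S m.+2 * _]mulrC -mulr_natr; lra.
Qed.

Lemma cheb n : S n.+1 <= #|[set i | p i != 0]|%:R * S n.+2.
Proof.
set U := [set i | p i != 0].
have SU k : S k.+1 = \sum_(i in U) p i ^+ k.+1.
  rewrite /S (bigID (fun i => i \in U)) /= [X in _ + X]big1 ?addr0 // => i.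
  by rewrite inE negbK => /eqP ->; rewrite exprS mul0r.
have rE : #|U|%:R = \sum_(i in U) (1 : R) by rewrite sumr_const.
have DU (F G : 'I_d -> R) : \sum_(i in U) \sum_(j in U) F i * G j =
   (\sum_(i in U) F i) * (\sum_(j in U) G j) by rewrite big_distrlr.
have : 0 <= \sum_(i in U) \sum_(j in U)
   (p i ^+ n.+2 * 1 + 1 * p j ^+ n.+2 - (p i ^+ 1 * p j ^+ n.+1 + p i ^+ n.+1 * p j ^+ 1)).
  apply: sumr_ge0 => i _; apply: sumr_ge0 => j _.
  have -> : p i ^+ n.+2 * 1 + 1 * p j ^+ n.+2 - (p i ^+ 1 * p j ^+ n.+1 + p i ^+ n.+1 * p j ^+ 1)
     = (p i - p j) * (p i ^+ n.+1 - p j ^+ n.+1) by rewrite !exprS; ring.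
  case: (lerP (p i) (p j)) => H.
    apply: mulr_le0; first by rewrite subr_le0.
    by rewrite subr_le0 lerXn2r // qualifE /= p0.
  apply: mulr_ge0; first by rewrite subr_ge0 ltW.
  by rewrite subr_ge0 lerXn2r ?ltW // qualifE /= p0.
under eq_bigr => i _ do rewrite sumrB big_split /= big_split /=.
rewrite sumrB !big_split /= !DU -!SU -rE S_1.
lra.
Qed.

Let r : R := #|[set i | p i != 0]|%:R.
Let g n := ln (S n).

Lemma r_gt0 : 0 < r.
Proof.
have H := cheb 0; have H1 := S_gt0 1; have H2 := S_gt0 2.
have : 0 < r * S 2 by exact: (lt_le_trans H1 H).
by rewrite pmulr_lgt0.
Qed.

Lemma g_1 : g 1 = 0.
Proof. by rewrite /g S_1 ln1. Qed.

Lemma g_conv m : g m.+1 *+ 2 <= g m + g m.+2.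
Proof.
rewrite /g -lnXn ?S_gt0 // -lnM ?posrE ?S_gt0 //.
by rewrite ler_ln ?posrE ?exprn_gt0 ?mulr_gt0 ?S_gt0 // cs.
Qed.

Lemma g_cheb n : g n.+1 <= ln r + g n.+2.
Proof.
rewrite /g -lnM ?posrE ?S_gt0 ?r_gt0 //.
by rewrite ler_ln ?posrE ?mulr_gt0 ?S_gt0 ?r_gt0 // cheb.
Qed.

Lemma g_mono n : (n%:R + 1) * g n.+1 <= n%:R * g n.+2.
Proof.
elim: n => [|n IH]; first by rewrite mul0r add0r mul1r g_1.
have C := g_conv n.+1.
have N0 : 0 <= n%:R + 1 :> R by rewrite addr_ge0 ?ler0n.
have H : (n%:R + 1) * (g n.+2 *+ 2 - g n.+1 - g n.+3) <= 0.
  by apply: mulr_ge0_le0 => //; rewrite -mulr_natr in C *; lra.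
rewrite -natr1; rewrite -mulr_natr in H; nra.
Qed.

Lemma g_main m b : (m + b)%:R * g m.+1 <= m%:R * g (m + b).+1.
Proof.
elim: b => [|b IH]; first by rewrite addn0.
rewrite addnS.
set M := (m + b)%N in IH *.
have Hm := g_mono M.
case: (posnP M) => HM.
  have Hm0 : m = 0%N by move: HM; rewrite /M; case: m {IH Hm M} => //.
  by rewrite Hm0 HM /= g_1 !mulr0 mul0r.
have Mp : 0 < M%:R :> R by rewrite ltr0n.
have N0 : 0 <= m%:R :> R by rewrite ler0n.
have H1 : (M%:R + 1) * (M%:R * g m.+1) <= (M%:R + 1) * (m%:R * g M.+1).
  by apply: ler_wpM2l => //; rewrite addr_ge0 ?ler0n.
have H2 : m%:R * ((M%:R + 1) * g M.+1) <= m%:R * (M%:R * g M.+2).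
  by apply: ler_wpM2l.
have H3 : M%:R * ((M%:R + 1) * g m.+1 - m%:R * g M.+2) <= 0.
  nra.
rewrite pmulr_rle0 // in H3.
rewrite -natr1; lra.
Qed.

Lemma g_main' n T : (1 <= n)%N -> (n <= T)%N -> (T%:R - 1) * g n <= (n%:R - 1) * g T.
Proof.
case: n => // m _ HT.
have -> : T = (m + (T - m.+1)).+1 by rewrite -addSn subnKC.
rewrite -!natr1 !addrK; exact: g_main.
Qed.

Lemma g_low n : - (n%:R * ln r) <= g n.+1.
Proof.
elim: n => [|n IH]; first by rewrite mul0r oppr0 g_1.
have := g_cheb n; rewrite -natr1; lra.
Qed.
End Ineq.

Lemma ln_prod (R : realType) (I : finType) (A : pred I) (F : I -> R) :
  (forall i, A i -> 0 < F i) ->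
  ln (\prod_(i | A i) F i) = \sum_(i | A i) ln (F i).
Proof.
move=> HF.
suff [] : \sum_(i | A i) ln (F i) = ln (\prod_(i | A i) F i) /\ 0 < \prod_(i | A i) F i by [].
apply: (big_ind2 (fun x y => x = ln y /\ 0 < y)).
- by rewrite ln1.
- move=> x1 x2 y1 y2 [-> H1] [-> H2]; split; last exact: mulr_gt0.
  by rewrite lnM ?posrE.
- by move=> i Hi; split => //; exact: HF.
Qed.

Lemma powE (R : realType) (a x : R) : 0 < a -> a `^ x = expR (x * ln a).
Proof. by move=> Ha; rewrite /powR gt_eqF. Qed.

Theorem proposition20 (R : realType) (d t : nat)
  (p : 'I_d -> R) (psi phi : 'I_d -> 'I_d -> R[i]) (pi sigma : 'S_t) :
  (2 <= t)%N ->
  (forall i, 0 <= p i) -> \sum_(i < d) p i = 1 ->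
  (* {psi_i} and {phi_i} orthonormal bases of C^d (psi i a = a-th coordinate) *)
  (forall i j, \sum_(a < d) psi i a * (psi j a)^* = (i == j)%:R) ->
  (forall i j, \sum_(a < d) phi i a * (phi j a)^* = (i == j)%:R) ->
  let Psi := fun a b : 'I_d => \sum_(i < d) ((Num.sqrt (p i))%:C)%C * psi i a * phi i b in
  let Lambda := diag_mx (\row_(i < d) p i) in
  let beta := ((pi^-1) * sigma)%g (* = sigma o pi^-1 as functions *) in
  let k := #|porbits beta| in
  let chi := \prod_(c in porbits beta) \tr (Lambda ^+ #|c|) in
  tr_WPsi pi sigma Psi = (chi%:C)%C /\
  deff 0 p `^ (k%:R - t%:R) <= chi /\ chi <= deff t%:R p `^ (k%:R - t%:R).
Proof.
move=> t2 p0 p1 Opsi Ophi Psi Lambda beta k chi.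
have [j0 _] : exists j0 : 'I_d, True.
  case: (pickP (fun i : 'I_d => true)) => [j0 _|H]; first by exists j0.
  by move: p1; rewrite big_pred0 // => /eqP; rewrite eq_sym oner_eq0.
set S := fun n => \sum_(i < d) p i ^+ n.
have chiE : chi = \prod_(c in porbits beta) S #|c|.
  by apply: eq_bigr => c _; rewrite trace_pow.
split.
  rewrite (part1 _ _ _ _ _ _ _ _ j0 p0 Opsi Ophi) chiE rmorph_prod.
  apply: eq_bigr => c _; rewrite rmorph_sum; apply: eq_bigr => i _.
  by rewrite rmorphXn.
have Spos n : 0 < S n by exact: S_gt0.
have chi_pos : 0 < chi by rewrite chiE prodr_gt0 // => c _; exact: Spos.
have lnchi : ln chi = \sum_(c in porbits beta) ln (S #|c|).
  by rewrite chiE ln_prod // => c _; exact: Spos.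
have sumc : (\sum_(c in porbits beta) #|c|)%N = t.
  rewrite -[RHS](card_ord t) -sum1_card.
  rewrite (partition_big (porbit beta) (fun c => c \in porbits beta)) /=; last first.
    by move=> s _; apply: imset_f.
  apply: eq_bigr => c /imsetP[x _ ->]; rewrite sum1_card.
  by apply: eq_card => s; symmetry; exact: eq_porbit_mem.
have cge1 c : c \in porbits beta -> (1 <= #|c| <= t)%N.
  case/imsetP => x _ ->; rewrite lt0n card_porbit_neq0 /=.
  by apply: leq_trans (max_card _) _; rewrite card_ord.
have kE : \sum_(c in porbits beta) (#|c|%:R - 1) = t%:R - k%:R :> R.
  by rewrite sumrB -natr_sum sumc sumr_const.
have ln2 : 0 < ln (2 : R) by rewrite ln_gt0 // ltr1n.
set r : R := #|[set i | p i != 0]|%:R.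
have r0 : 0 < r by exact: r_gt0.
split.
  rewrite /deff /renyi eqxx /log2 [2 `^ _]powE ?ltr0n // divfK ?gt_eqF //.
  rewrite lnK ?posrE // powE // -(lnK chi_pos) ler_expR lnchi.
  have H c : c \in porbits beta -> - ((#|c|%:R - 1) * ln r) <= ln (S #|c|).
    move/cge1 => /andP[H1 _]; have := g_low _ _ _ p0 p1 (#|c|.-1).
    by rewrite -(prednK H1) -natr1 addrK.
  apply: le_trans (ler_sum _ H).
  by rewrite sumrN -mulr_suml kE; lra.
rewrite /deff /renyi.
have Tne0 : (t%:R == 0 :> R) = false.
  by rewrite pnatr_eq0; apply/negbTE; rewrite -lt0n; exact: leq_trans _ t2.
have Tne1 : (t%:R == 1 :> R) = false.
  by rewrite pnatr_eq1; apply/negbTE; rewrite neq_ltn t2 orbT.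
rewrite Tne0 Tne1.
have StE : \sum_(i < d) p i `^ t%:R = S t.
  by apply: eq_bigr => i _; rewrite powR_mulrn.
rewrite StE /log2 [2 `^ _]powE ?ltr0n // -mulrA divfK ?gt_eqF //.
rewrite powE ?expR_gt0 // expRK -(lnK chi_pos) ler_expR lnchi.
have Hup : (t%:R - 1) * \sum_(c in porbits beta) ln (S #|c|) <= (t%:R - k%:R) * ln (S t).
  rewrite mulr_sumr -kE mulr_suml; apply: ler_sum => c /cge1/andP[H1 H2].
  exact: (g_main' _ _ _ p0 p1 _ _ H1 H2).
have a1 : 0 < t%:R - 1 :> R by rewrite subr_gt0 ltr1n.
have -> : (k%:R - t%:R) * ((1 - t%:R)^-1 * ln (S t)) =
   ((t%:R - k%:R) * ln (S t)) / (t%:R - 1) :> R.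
  rewrite -[1 - t%:R]opprB invrN; ring.
rewrite ler_pdivlMr //; nra.
Qed.
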